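(* Let $f:\mathbb{R}^n\to\mathbb{R}$ be convex and differentiable with $\nabla f$ $L$-Lipschitz continuous, and assume $X^*$ is non-empty. Then the sequence $\{x^k\}$ generated by Algorithm 3 (with $\nabla f(x^k)\ne0$ for all $k$) satisfies, for every $x^*\in X^*$ and every integer $K\ge1$, $$\frac1K\sum_{k=0}^{K-1}\|\nabla f(x^k)\|^2\le\frac{\|x^0-x^*\|^2}{K\kappa_4h_{\min}^2},$$ where $\alpha_{\min}=\frac{(1-\beta)\left(1-\frac{L\overline{h}}{4}\right)+\beta(1-\nu)}{2+2\beta^2\nu^2}$, $\kappa_4=\eta(2-\eta)\alpha_{\min}\left((1-\beta)\left(1-\frac{L\overline{h}}{4}\right)+\beta(1-\nu)\right)$ and $h_{\min}=\min\left\{\underline{h},\frac{\nu\theta}{\overline{h}\max\{L,1\}^2}\right\}$.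
   Context: $X^*=\{x:\nabla f(x)=0\}$ (the set of minimizers of the convex $f$). Algorithm 3: parameters $0<\mu<\nu<1$, $0<\underline{h}<1\le\gamma_0^0\le\overline{h}<\frac4L$, $0\le\beta\le1$, $\theta\in(0,1)$, $\tau>1$, $\eta\in(0,2)$, starting point $x^0$; run while $\nabla f(x^k)\neq0$. At iteration $k$: for $\gamma>0$ let $z^k(\gamma)=x^k-\gamma\nabla f(x^k)$ and $r_k(\gamma)=\gamma\|\nabla f(z^k(\gamma))-\nabla f(x^k)\|/\|z^k(\gamma)-x^k\|$; starting from $\gamma_0^k$, while $r_k(\gamma_l^k)>\nu$ set $\gamma_{l+1}^k=\gamma_l^k\theta\min\{1,1/r_k(\gamma_l^k)\}$; let $h_k$ be the first $\gamma_l^k$ with $r_k(\gamma_l^k)\le\nu$. Then $z^k=x^k-h_k\nabla f(x^k)$ and $x^{k+1}=x^k-\eta\alpha_kh_k\big(\nabla f(x^k)-\beta(\nabla f(x^k)-\nabla f(z^k))\big)$ with $$\alpha_k=\frac{(1-\beta)\left(1-\frac{Lh_k}{4}\right)\|x^k-z^k\|^2+\beta\langle x^k-z^k,h_k\nabla f(z^k)\rangle}{h_k^2\|\nabla f(x^k)-\beta(\nabla f(x^k)-\nabla f(z^k))\|^2};$$ finally $\gamma_0^{k+1}=\mathbf{P}_{[\underline{h},\overline{h}]}(\tau h_k)$ if $r_k(h_k)\le\mu$, else $\gamma_0^{k+1}=\mathbf{P}_{[\underline{h},\overline{h}]}(h_k)$, where $\mathbf{P}_{[a,b]}$ is projection onto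 $[a,b]$. *)

(* Defs.v *)
From HB Require Import structures.
From mathcomp Require Import all_boot all_order all_algebra.
From mathcomp Require Import all_classical all_reals all_analysis.
Set Implicit Arguments. Unset Strict Implicit. Unset Printing Implicit Defensive.
Import Order.TTheory GRing.Theory Num.Theory.
Import numFieldNormedType.Exports.
Local Open Scope ring_scope.

Section Defs.
Variables (R : realType) (n : nat).
Local Notation vec := 'rV[R]_n.

Definition dotv (u v : vec) : R := \sum_(i < n) u 0 i * v 0 i.
Definition enorm (v : vec) : R := Num.sqrt (dotv v v).

Definition convex_fun (f : vec -> R) : Prop :=
  forall (x y : vec) (t : R), 0 <= t <= 1 ->
    f (t *: x + (1 - t) *: y) <= t * f x + (1 - t) * f y.

Definition has_gradient (f : vec -> R) (gf : vec -> vec) : Prop :=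
  forall x : vec, differentiable f x /\ forall v : vec, 'd f x v = dotv (gf x) v.

Definition lipschitz_grad (gf : vec -> vec) (L : R) : Prop :=
  forall x y : vec, enorm (gf x - gf y) <= L * enorm (x - y).

Definition minimizer_set (gf : vec -> vec) : set vec := [set x | gf x = 0].

Definition zpt (gf : vec -> vec) (x : vec) (g : R) : vec := x - g *: gf x.
Definition ratio (gf : vec -> vec) (x : vec) (g : R) : R :=
  g * enorm (gf (zpt gf x g) - gf x) / enorm (zpt gf x g - x).

Fixpoint trial (gf : vec -> vec) (x : vec) (theta g0 : R) (l : nat) : R :=
  match l with
  | 0 => g0
  | l'.+1 => let g := trial gf x theta g0 l' in
             g * theta * Num.min 1 (1 / ratio gf x g)
  end.

Definition projI (a b t : R) : R := Num.max a (Num.min b t).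

Definition alpha_k (gf : vec -> vec) (L beta : R) (x : vec) (h : R) : R :=
  let z := zpt gf x h in
  let d := gf x - beta *: (gf x - gf z) in
  ((1 - beta) * (1 - L * h / 4) * enorm (x - z) ^+ 2
     + beta * dotv (x - z) (h *: gf z))
  / (h ^+ 2 * enorm d ^+ 2).

(* (x, g0, h) are the sequences x^k, gamma_0^k, h_k generated by Algorithm 3
   from x^0 = x0 and gamma_0^0 = g00, with grad f(x^k) <> 0 for all k. *)
Definition algorithm3 (gf : vec -> vec) (L mu nu hlo hhi beta theta tau eta : R)
  (x0 : vec) (g00 : R) (x : nat -> vec) (g0 h : nat -> R) : Prop :=
  x 0%N = x0 /\ g0 0%N = g00 /\
  forall k : nat,
    gf (x k) != 0 /\
    (exists m : nat,
       (forall l : nat, (l < m)%N -> ratio gf (x k) (trial gf (x k) theta (g0 k) l) > nu)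
       /\ ratio gf (x k) (trial gf (x k) theta (g0 k) m) <= nu
       /\ h k = trial gf (x k) theta (g0 k) m) /\
    x k.+1 = x k - (eta * alpha_k gf L beta (x k) (h k) * h k)
                     *: (gf (x k) - beta *: (gf (x k) - gf (zpt gf (x k) (h k)))) /\
    g0 k.+1 = (if ratio gf (x k) (h k) <= mu then projI hlo hhi (tau * h k)
               else projI hlo hhi (h k)).

End Defs.

(* Main.v *)
Require Import Defs.
From HB Require Import structures.
From mathcomp Require Import all_boot all_order all_algebra.
From mathcomp Require Import all_classical all_reals all_analysis.
From mathcomp Require Import ring lra.
Import Order.TTheory GRing.Theory Num.Theory.
Import numFieldNormedType.Exports.
Local Open Scope ring_scope.


Section IP.
Context {R : realType} {n : nat}.
Implicit Types (u v w : 'rV[R]_n) (a b : R).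

Lemma dotvC u v : dotv u v = dotv v u.
Proof. by rewrite /dotv; apply: eq_bigr => i _; rewrite mulrC. Qed.

Lemma dotvDl u v w : dotv (u + v) w = dotv u w + dotv v w.
Proof. by rewrite /dotv -big_split; apply: eq_bigr => i _; rewrite !mxE mulrDl. Qed.

Lemma dotvZl a u v : dotv (a *: u) v = a * dotv u v.
Proof. by rewrite /dotv mulr_sumr; apply: eq_bigr => i _; rewrite !mxE mulrA. Qed.

Lemma dotvNl u v : dotv (- u) v = - dotv u v.
Proof. by rewrite -scaleN1r dotvZl mulN1r. Qed.

Lemma dotvBl u v w : dotv (u - v) w = dotv u w - dotv v w.
Proof. by rewrite dotvDl dotvNl. Qed.

Lemma dotvDr u v w : dotv u (v + w) = dotv u v + dotv u w.
Proof. by rewrite dotvC dotvDl !(dotvC u). Qed.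
Lemma dotvZr a u v : dotv u (a *: v) = a * dotv u v.
Proof. by rewrite dotvC dotvZl dotvC. Qed.
Lemma dotvNr u v : dotv u (- v) = - dotv u v.
Proof. by rewrite dotvC dotvNl dotvC. Qed.
Lemma dotvBr u v w : dotv u (v - w) = dotv u v - dotv u w.
Proof. by rewrite dotvDr dotvNr. Qed.
Lemma dotv0l v : dotv 0 v = 0.
Proof. by rewrite -(scale0r 0) dotvZl mul0r. Qed.
Lemma dotv0r v : dotv v 0 = 0.
Proof. by rewrite dotvC dotv0l. Qed.

Lemma dotv_ge0 u : 0 <= dotv u u.
Proof. by apply: sumr_ge0 => i _; rewrite -expr2 sqr_ge0. Qed.

Lemma dotv_eq0 u : dotv u u = 0 -> u = 0.
Proof.
move=> /eqP; rewrite psumr_eq0 => [/allP H|i _]; last by rewrite -expr2 sqr_ge0.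
apply/rowP => i; rewrite mxE; have := H i (mem_index_enum i).
by rewrite -expr2 sqrf_eq0 => /eqP.
Qed.

Lemma enorm_ge0 u : 0 <= enorm u.
Proof. exact: sqrtr_ge0. Qed.

Lemma enorm_sq u : enorm u ^+ 2 = dotv u u.
Proof. by rewrite /enorm sqr_sqrtr // dotv_ge0. Qed.

Lemma enorm_gt0 u : u != 0 -> 0 < enorm u.
Proof.
move=> u0; rewrite lt_def enorm_ge0 andbT; apply/eqP => e0.
have : dotv u u = 0 by rewrite -enorm_sq e0 expr0n.
by move/dotv_eq0 => u00; rewrite u00 eqxx in u0.
Qed.

Lemma enormZ a u : enorm (a *: u) = `|a| * enorm u.
Proof.
rewrite /enorm dotvZl dotvZr mulrA -expr2 sqrtrM ?sqr_ge0 //.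
by rewrite sqrtr_sqr.
Qed.

Lemma enormN u : enorm (- u) = enorm u.
Proof. by rewrite /enorm dotvNl dotvNr opprK. Qed.

Lemma CS_sq u v : dotv u v ^+ 2 <= dotv u u * dotv v v.
Proof.
have [->|v0] := eqVneq v 0; first by rewrite !dotv0r expr0n mulr0.
have vp : 0 < dotv v v by rewrite -enorm_sq exprn_gt0 // enorm_gt0.
set w := dotv v v *: u - dotv u v *: v.
have := dotv_ge0 w.
rewrite /w !(dotvBl, dotvBr, dotvZl, dotvZr) (dotvC v u).
move=> H.
have : 0 <= dotv v v * (dotv v v * dotv u u - dotv u v ^+ 2) by
  move: H; congr (_ <= _); ring.
rewrite pmulr_rge0 // subr_ge0 => H2; by rewrite mulrC.
Qed.

Lemma CS u v : dotv u v <= enorm u * enorm v.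
Proof.
apply: (le_trans (ler_norm _)).
rewrite -(@ler_pXn2r _ 2) // ?nnegrE ?mulr_ge0 ?enorm_ge0 //.
by rewrite real_normK ?num_real // exprMn !enorm_sq CS_sq.
Qed.

Lemma CSn u v : - (enorm u * enorm v) <= dotv u v.
Proof. by rewrite lerNl -dotvNl -(enormN u) CS. Qed.

End IP.


Section An.
Local Open Scope classical_set_scope.
Context {R : realType} {n : nat}.
Implicit Types (u v w x y : 'rV[R]_n) (a b : R).

Lemma line_is_derive (f : 'rV[R]_n -> R) x v (c : R) :
  differentiable f (x + c *: v) ->
  is_derive c 1 (fun t => f (x + t *: v)) ('d f (x + c *: v) v).
Proof.
move=> df.
have E : (fun h : R => h^-1 *: (((fun t => f (x + t *: v)) \o shift c) (h *: 1)
     - f (x + c *: v))) =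
   (fun h => h^-1 *: ((f \o shift (x + c *: v)) (h *: v) - f (x + c *: v))).
  apply/funext => h /=; congr (_ *: (f _ - _)).
  by rewrite [h *: 1]mulr1 scalerDl addrCA addrA.
split; first by rewrite /derivable E; exact: diff_derivable.
by rewrite /derive E -/(derive f _ v); exact: deriveE.
Qed.

End An.


Section An2.
Local Open Scope classical_set_scope.
Context {R : realType} {n : nat}.
Implicit Types (u v w x y : 'rV[R]_n) (a b : R).

Lemma grad_ineq (f : 'rV[R]_n -> R) gf x y :
  convex_fun f -> has_gradient f gf -> f x + dotv (gf x) (y - x) <= f y.
Proof.
move=> cf hg.
set v := y - x.
have [dfx dfv] := hg x.
have dv : derivable f x v := diff_derivable (v:=v) dfx.
have lim1 : (fun h : R => h^-1 *: ((f \o shift x) (h *: v) - f x)) @ 0^' --> 'D_v f x.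
  exact: dv.
have lim2 : (fun h : R => h^-1 *: ((f \o shift x) (h *: v) - f x)) @ 0^'+ --> 'D_v f x.
  apply: cvg_trans lim1; apply: cvg_app => P /=.
  rewrite /dnbhs /at_right /within /=.
  change ((\forall t \near nbhs (0:R), t != 0 -> P t) -> (\forall t \near nbhs (0:R), 0 < t -> P t)).
  move=> H; apply: filterS H => t H t0; apply: H; exact: lt0r_neq0.
have le : 'D_v f x <= f y - f x.
  apply: (cvgr_to_le lim2).
  near=> t.
  have t0 : 0 < t by near: t; exact: nbhs_right_gt.
  have t1 : t <= 1 by near: t; exact: nbhs_right_le.
  have := cf y x t; rewrite t1 ltW //= => /(_ isT) H.
  rewrite /=.
  have -> : t *: v + x = t *: y + (1 - t) *: x.
    by rewrite /v scalerBr scalerBl scale1r -addrA [- _ + _]addrC.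
  rewrite [_ *: _]mulrC ler_pdivrMr // mulrC; lra.
rewrite -lerBrDl; move: le; rewrite (deriveE _ dfx) dfv //.
Unshelve. all: by end_near.
Qed.
End An2.


Section An3.
Local Open Scope classical_set_scope.
Context {R : realType} {n : nat}.
Implicit Types (u v w x y : 'rV[R]_n) (a b : R).

Lemma descent (f : 'rV[R]_n -> R) gf (L : R) x y :
  has_gradient f gf -> lipschitz_grad gf L ->
  f y <= f x + dotv (gf x) (y - x) + L / 2 * enorm (y - x) ^+ 2.
Proof.
move=> hg lg.
set v := y - x; set a := dotv (gf x) v; set b := L / 2 * enorm v ^+ 2.
pose psi := (fun t => f (x + t *: v)) - (a \*: (@idfun R) + b \*: ((@idfun R) * (@idfun R))).
have dpsi : forall c : R, is_derive c (1:R) psi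
   ('d f (x + c *: v) v - (a *: (1:R) + b *: (c *: (1:R) + c *: 1))).
  move=> c; apply: is_deriveB; first exact: line_is_derive (hg _).1.
have cont : {within `[0, 1], continuous psi}.
  apply: derivable_within_continuous => t _.
  by have [] := dpsi t.
have [c c01 E] := MVT_segment (@ler01 R) (fun c _ => dpsi c) cont.
have c0 : 0 <= c by move: c01; rewrite in_itv /= => /andP[].
have sA : forall r : R, r%:A = r by move=> r; exact: mulr1.
have sZ : forall r s : R, r *: s = r * s by [].
have dle : 'd f (x + c *: v) v - (a%:A + b *: (c%:A + c%:A)) <= 0.
  rewrite (hg _).2 /a !sA sZ.
  have h1 := CS (gf (x + c *: v) - gf x) v.
  have h2 := lg (x + c *: v) x.
  rewrite addrAC subrr add0r enormZ ger0_norm // in h2.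
  have h3 : enorm (gf (x + c *: v) - gf x) * enorm v <= L * (c * enorm v) * enorm v.
    by apply: ler_wpM2r => //; exact: enorm_ge0.
  rewrite dotvBl in h1.
  have -> : b * (c + c) = L * (c * enorm v) * enorm v by rewrite /b; field.
  lra.
have psiE : forall t, psi t = f (x + t *: v) - (a * t + b * (t * t)) by [].
have xy : x + 1 *: v = y by rewrite scale1r /v addrC subrK.
move: E; rewrite !psiE xy scale0r addr0 !mulr1 !mulr0 subr0 mulr1 => E.
rewrite !sA !sZ in E dle.
lra.
Qed.
End An3.


Section An4.
Context {R : realType} {n : nat}.
Implicit Types (u v w x y : 'rV[R]_n) (a b : R).

Lemma cocoercive (f : 'rV[R]_n -> R) gf (L : R) x xs :
  convex_fun f -> has_gradient f gf -> lipschitz_grad gf L -> 0 < L ->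
  gf xs = 0 -> dotv (gf x) (gf x) / L <= dotv (gf x) (x - xs).
Proof.
move=> cf hg lg L0 gxs.
set g := gf x; set G := dotv g g.
have d1 := descent f gf L x (x - L^-1 *: g) hg lg.
have g1 := grad_ineq f gf xs (x - L^-1 *: g) cf hg.
have d2 := descent f gf L xs (xs + L^-1 *: g) hg lg.
have g2 := grad_ineq f gf x (xs + L^-1 *: g) cf hg.
rewrite gxs dotv0l addr0 in g1.
rewrite gxs dotv0l addr0 in d2.
rewrite -/g [xs + _]addrC addrK enorm_sq dotvZl dotvZr -/G in d2.
rewrite -/g [x - _]addrC addrK enormN enorm_sq dotvZl dotvZr -/G dotvNr dotvZr -/G in d1.
rewrite -/g addrAC dotvDr dotvZr -/G in g2.
have e1 : L / 2 * (L^-1 * (L^-1 * G)) = G / L / 2 by field; lra.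
have e2 : L^-1 * G = G / L by rewrite mulrC.
rewrite e1 in d1 d2; rewrite e2 in d1 g2.
rewrite [L^-1 *: g + xs]addrC in d2.
rewrite [- (L^-1 *: g) + x]addrC in d1.
rewrite -opprB dotvNr; lra.
Qed.

Lemma monotone0 (f : 'rV[R]_n -> R) gf z xs :
  convex_fun f -> has_gradient f gf -> gf xs = 0 -> 0 <= dotv (gf z) (z - xs).
Proof.
move=> cf hg gxs.
have g1 := grad_ineq f gf z xs cf hg.
have g2 := grad_ineq f gf xs z cf hg.
rewrite gxs dotv0l addr0 in g2.
rewrite -opprB dotvNr in g1; lra.
Qed.

End An4.


Lemma scalar_step (R : realFieldType) (E P Q G s W a bw h L be nu eta hhi N Dd al C : R) :
  0 < a -> G = a ^+ 2 -> W = bw ^+ 2 -> 0 <= bw -> bw <= nu * a ->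
  - (a * bw) <= s -> s <= a * bw ->
  G <= L * P -> 0 <= Q -> 0 < h -> h <= hhi -> 0 < L -> L * hhi < 4 ->
  0 <= be -> be <= 1 -> 0 < nu -> nu < 1 -> 0 < eta -> eta < 2 ->
  N = (1 - be) * (1 - L * h / 4) * (h ^+ 2 * G) + be * (h ^+ 2 * (G + s)) ->
  Dd = G + 2 * be * s + be ^+ 2 * W ->
  al = N / (h ^+ 2 * Dd) ->
  C = (1 - be) * (1 - L * hhi / 4) + be * (1 - nu) ->
  E - 2 * (eta * al * h) * ((1 - be) * P + be * (h * (G + s) + Q))
    + (eta * al * h) ^+ 2 * Dd
  <= E - eta * (2 - eta) * (C / (2 + 2 * be ^+ 2 * nu ^+ 2)) * C * (h ^+ 2 * G).
Proof.
move=> a0 eG eW bw0 bwa sl su LP Q0 h0 hh L0 Lh b0 b1 nu0 nu1 e0 e2 eN eD eal eC.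
have G0 : 0 < G by rewrite eG exprn_gt0.
have bwa2 : be * bw <= nu * a by nra.
have Dpos : 0 < Dd.
  have D1 : (a - be * bw) ^+ 2 <= Dd.
    rewrite eD eW eG.
    have : 0 <= be * (s + a * bw) by apply: mulr_ge0; lra.
    lra.
  have na : 0 < (1 - nu) * a by apply: mulr_gt0; lra.
  have : 0 < (a - be * bw) ^+ 2. apply: exprn_gt0. clear -bwa2 na. lra.
  lra.
have Dup : Dd <= (2 + 2 * be ^+ 2 * nu ^+ 2) * G.
  rewrite eD eW eG.
  have abw : a * bw <= a * (nu * a) by apply: ler_wpM2l; [exact: ltW|].
  have h1 : be * s <= be * (nu * a ^+ 2).
    apply: ler_wpM2l => //; rewrite expr2; lra.
  have h2 : bw ^+ 2 <= (nu * a) ^+ 2 by rewrite ler_sqr // ?nnegrE // mulr_ge0 // ltW.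
  have h2' : be ^+ 2 * bw ^+ 2 <= be ^+ 2 * (nu * a) ^+ 2 by apply: ler_wpM2l; [exact: sqr_ge0|].
  have h3 : 0 <= (1 - be * nu) ^+ 2 by exact: sqr_ge0.
  have h4 : 0 <= (1 - be * nu) ^+ 2 * a ^+ 2 by apply: mulr_ge0; [|exact: sqr_ge0].
  rewrite exprMn in h2'.
  lra.
have Cpos : 0 < C.
  rewrite eC.
  have p1 : 0 < 1 - L * hhi / 4.
    have : L * hhi / 4 < 1 by rewrite ltr_pdivrMr //; lra.
    lra.
  have q1 : 0 <= be * (1 - nu) by apply: mulr_ge0; lra.
  have q2 : 0 <= (1 - be) * (1 - L * hhi / 4) by apply: mulr_ge0; lra.
  case: (lerP be (1/2)) => hb.
    have : 0 <= (1/2 - be) * (1 - L * hhi / 4) by apply: mulr_ge0; lra.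
    lra.
  have : 0 <= (be - 1/2) * (1 - nu) by apply: mulr_ge0; lra.
  lra.
have h2G : 0 < h ^+ 2 * G by rewrite mulr_gt0 // exprn_gt0.
have Nlow : C * (h ^+ 2 * G) <= N.
  rewrite eN eC.
  have q1 : (1 - L * hhi / 4) <= (1 - L * h / 4) by nra.
  have q2 : (1 - nu) * G <= G + s by rewrite eG; nra.
  have q3 : (1 - be) * (1 - L * hhi / 4) * (h ^+ 2 * G) <= (1 - be) * (1 - L * h / 4) * (h ^+ 2 * G).
    apply: ler_wpM2r; first exact: ltW.
    by apply: ler_wpM2l => //; lra.
  have q4 : be * (1 - nu) * (h ^+ 2 * G) <= be * (h ^+ 2 * (G + s)).
    rewrite -mulrA; apply: ler_wpM2l => //.
    rewrite mulrCA; apply: ler_wpM2l => //; first by rewrite exprn_ge0 // ltW.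
  lra.
have N0 : 0 < N by apply: lt_le_trans Nlow; exact: mulr_gt0.
have hD : 0 < h ^+ 2 * Dd by rewrite mulr_gt0 // exprn_gt0.
have alE : al * (h ^+ 2 * Dd) = N by rewrite eal divfK // gt_eqF.
have al0 : 0 < al by rewrite eal divr_gt0.
have Dp : N <= h * ((1 - be) * P + be * (h * (G + s) + Q)).
  have k1 : (1 - L * h / 4) * h * L <= 1.
    have := sqr_ge0 (1 - L * h / 2); lra.
  have hG0 : 0 <= h * G by apply: mulr_ge0; apply: ltW.
  have k1' : ((1 - L * h / 4) * h * L) * (h * G) <= 1 * (h * G) by apply: ler_wpM2r.
  have k1'' : h * G <= h * (L * P) by apply: ler_wpM2l => //; exact: ltW.
  have k5 : ((1 - L * h / 4) * (h ^+ 2 * G)) * L <= (h * P) * L.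
    rewrite expr2; lra.
  rewrite ler_pM2r // in k5.
  have k2 : (1 - be) * ((1 - L * h / 4) * (h ^+ 2 * G)) <= (1 - be) * (h * P).
    by apply: ler_wpM2l => //; lra.
  have k4 : 0 <= be * h * Q by rewrite mulr_ge0 // mulr_ge0 // ltW.
  rewrite eN.
  have -> : h * ((1 - be) * P + be * (h * (G + s) + Q)) = (1 - be) * (h * P) + be * (h ^+ 2 * (G + s)) + be * h * Q by ring.
  lra.
have alm : C / (2 + 2 * be ^+ 2 * nu ^+ 2) <= al.
  have c0 : 0 < 2 + 2 * be ^+ 2 * nu ^+ 2 by have := sqr_ge0 (be * nu); nra.
  rewrite eal ler_pdivlMr //.
  have m1 : h ^+ 2 * Dd <= h ^+ 2 * ((2 + 2 * be ^+ 2 * nu ^+ 2) * G).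
    by apply: ler_wpM2l => //; apply: exprn_ge0; exact: ltW.
  have m2 : C / (2 + 2 * be ^+ 2 * nu ^+ 2) * (h ^+ 2 * Dd) <= C / (2 + 2 * be ^+ 2 * nu ^+ 2) * (h ^+ 2 * ((2 + 2 * be ^+ 2 * nu ^+ 2) * G)).
    by apply: ler_wpM2l => //; apply: divr_ge0; exact: ltW.
  have m3 : C / (2 + 2 * be ^+ 2 * nu ^+ 2) * (h ^+ 2 * ((2 + 2 * be ^+ 2 * nu ^+ 2) * G)) = C * (h ^+ 2 * G).
    by field; rewrite gt_eqF.
  lra.
have fin1 : E - 2 * (eta * al * h) * ((1 - be) * P + be * (h * (G + s) + Q))
    + (eta * al * h) ^+ 2 * Dd <= E - eta * (2 - eta) * al * N.
  set Dp' := ((1 - be) * P + be * (h * (G + s) + Q)).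
  have f1 : (eta * al * h) ^+ 2 * Dd = eta ^+ 2 * al * N by rewrite -alE; ring.
  have f2 : 2 * (eta * al * h) * Dp' = 2 * (eta * al) * (h * Dp') by ring.
  have H : 2 * (eta * al) * N <= 2 * (eta * al) * (h * Dp').
    by apply: ler_wpM2l => //; rewrite mulr_ge0 // mulr_ge0 // ltW.
  rewrite f1 f2; lra.
apply: (le_trans fin1).
have z1 : (C / (2 + 2 * be ^+ 2 * nu ^+ 2)) * (C * (h ^+ 2 * G)) <= al * N.
  apply: ler_pM => //.
    by apply: divr_ge0; [exact: ltW|]; have := sqr_ge0 (be * nu); rewrite exprMn; lra.
  by apply: mulr_ge0; exact: ltW.
have z2 : 0 <= eta * (2 - eta) by apply: mulr_ge0; lra.
have z3 := ler_wpM2l z2 z1.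
have -> : eta * (2 - eta) * (C / (2 + 2 * be ^+ 2 * nu ^+ 2)) * C * (h ^+ 2 * G) = eta * (2 - eta) * ((C / (2 + 2 * be ^+ 2 * nu ^+ 2)) * (C * (h ^+ 2 * G))) by ring.
have -> : eta * (2 - eta) * al * N = eta * (2 - eta) * (al * N) by ring.
lra.
Qed.


Section Step.
Context {R : realType} {n : nat}.
Implicit Types (u v w x y : 'rV[R]_n) (a b : R).

Lemma enorm_zx (gf : 'rV[R]_n -> 'rV[R]_n) x h : 0 <= h ->
  enorm (zpt gf x h - x) = h * enorm (gf x).
Proof.
move=> h0; rewrite /zpt addrAC subrr add0r enormN enormZ ger0_norm //.
Qed.

Lemma ratio_le (gf : 'rV[R]_n -> 'rV[R]_n) L x h :
  lipschitz_grad gf L -> gf x != 0 -> 0 < h -> Defs.ratio gf x h <= h * L.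
Proof.
move=> lg gx h0.
have p : 0 < enorm (zpt gf x h - x) by rewrite (enorm_zx gf x h (ltW h0)) mulr_gt0 // enorm_gt0.
rewrite /Defs.ratio ler_pdivrMr // -mulrA; apply: ler_wpM2l; [exact: ltW | exact: lg].
Qed.

Lemma ratio_nu (gf : 'rV[R]_n -> 'rV[R]_n) x h nu :
  gf x != 0 -> 0 < h -> Defs.ratio gf x h <= nu ->
  enorm (gf (zpt gf x h) - gf x) <= nu * enorm (gf x).
Proof.
move=> gx h0; rewrite /Defs.ratio (enorm_zx gf x h (ltW h0)).
have a0 := enorm_gt0 _ gx.
rewrite ler_pdivrMr ?mulr_gt0 // => H.
have : h * enorm (gf (zpt gf x h) - gf x) <= h * (nu * enorm (gf x)) by
  move: H; congr (_ <= _); ring.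
by rewrite ler_pM2l.
Qed.

Lemma sq_exp (u d : 'rV[R]_n) (c : R) :
  dotv (u - c *: d) (u - c *: d) = dotv u u - 2 * c * dotv d u + c ^+ 2 * dotv d d.
Proof. rewrite !(dotvBl, dotvBr, dotvZl, dotvZr) (dotvC u d); ring. Qed.

Lemma d_exp (g k : 'rV[R]_n) (b : R) :
  dotv (g - b *: (g - k)) (g - b *: (g - k)) =
  dotv g g + 2 * b * dotv g (k - g) + b ^+ 2 * dotv (k - g) (k - g).
Proof. rewrite !(dotvBl, dotvBr, dotvZl, dotvZr) (dotvC k g); ring. Qed.

Lemma step (f : 'rV[R]_n -> R) gf (L beta nu eta hhi : R) x xs h :
  convex_fun f -> has_gradient f gf -> lipschitz_grad gf L -> 0 < L ->
  gf xs = 0 -> gf x != 0 ->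
  0 < h -> h <= hhi -> L * hhi < 4 -> 0 <= beta -> beta <= 1 ->
  0 < nu -> nu < 1 -> 0 < eta -> eta < 2 ->
  Defs.ratio gf x h <= nu ->
  enorm (x - (eta * alpha_k gf L beta x h * h) *:
            (gf x - beta *: (gf x - gf (zpt gf x h))) - xs) ^+ 2
  <= enorm (x - xs) ^+ 2 - eta * (2 - eta) *
       (((1 - beta) * (1 - L * hhi / 4) + beta * (1 - nu)) / (2 + 2 * beta ^+ 2 * nu ^+ 2)) *
       ((1 - beta) * (1 - L * hhi / 4) + beta * (1 - nu)) * (h ^+ 2 * dotv (gf x) (gf x)).
Proof.
move=> cf hg lg L0 gxs gx h0 hh Lh b0 b1 nu0 nu1 e0 e2 rat.
set g := gf x; set z := zpt gf x h; set gz := gf z.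
set d := g - beta *: (g - gz).
set c := eta * alpha_k gf L beta x h * h.
have xz : x - z = h *: g by rewrite /z /zpt opprB addrC subrK.
have eL : enorm (x - c *: d - xs) ^+ 2 =
    enorm (x - xs) ^+ 2 - 2 * c * dotv d (x - xs) + c ^+ 2 * enorm d ^+ 2.
  rewrite !enorm_sq.
  have -> : x - c *: d - xs = (x - xs) - c *: d by rewrite addrAC.
  rewrite sq_exp; ring.
have eDp : dotv d (x - xs) = (1 - beta) * dotv g (x - xs)
   + beta * (h * (dotv g g + dotv g (gz - g)) + dotv gz (z - xs)).
  have -> : z - xs = (x - xs) - h *: g by rewrite -xz opprB [RHS]addrC [RHS]addrA subrK.
  rewrite /d !(dotvBl, dotvBr, dotvZl, dotvZr) (dotvC gz g); ring.
rewrite eL eDp.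
apply: (@scalar_step R _ _ _ _ _ (dotv (gz - g) (gz - g)) (enorm g) (enorm (gz - g))
  h L beta nu eta hhi
  ((1 - beta) * (1 - L * h / 4) * (h ^+ 2 * dotv g g) + beta * (h ^+ 2 * (dotv g g + dotv g (gz - g))))) => //.
- exact: enorm_gt0 _ gx.
- by rewrite enorm_sq.
- by rewrite enorm_sq.
- exact: enorm_ge0.
- exact: ratio_nu gx h0 rat.
- exact: CSn.
- exact: CS.
- have := cocoercive f gf L x xs cf hg lg L0 gxs.
  by rewrite ler_pdivrMr // mulrC.
- exact: monotone0 f gf z xs cf hg gxs.
- by rewrite enorm_sq /d d_exp.
- rewrite /alpha_k /= -/z -/g -/gz -/d xz; congr (_ / _).
  rewrite enorm_sq !(dotvZl, dotvZr) dotvBr; ring.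
Qed.

End Step.


Section Trial.
Context {R : realType} {n : nat}.

Lemma trial_bounds (gf : 'rV[R]_n -> 'rV[R]_n) (L nu theta : R) x (g0 : R) m :
  lipschitz_grad gf L -> 0 < L -> gf x != 0 -> 0 < nu -> nu < 1 ->
  0 < theta -> theta < 1 -> 0 < g0 ->
  (forall l, (l < m)%N -> nu < Defs.ratio gf x (trial gf x theta g0 l)) ->
  forall l, (l <= m)%N ->
    0 < trial gf x theta g0 l /\ trial gf x theta g0 l <= g0 /\
    Num.min g0 (theta * nu / L) <= trial gf x theta g0 l.
Proof.
move=> lg L0 gx nu0 nu1 th0 th1 g00 Hm.
elim=> [|l IH] lm.
  by rewrite /= lexx ge_min lexx.
have lm' : (l < m)%N by exact: lm.
have [t0 [tg tmin]] := IH (ltnW lm').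
set t := trial gf x theta g0 l in t0 tg tmin *.
have rnu := Hm l lm'; rewrite -/t in rnu.
set r := Defs.ratio gf x t in rnu *.
have rL : r <= t * L by exact: ratio_le.
have r0 : 0 < r by exact: lt_trans nu0 rnu.
have -> : trial gf x theta g0 l.+1 = t * theta * Num.min 1 (1 / r) by [].
have m0 : 0 < Num.min 1 (1 / r) by rewrite lt_min ltr01 divr_gt0.
have m1 : Num.min 1 (1 / r) <= 1 by rewrite ge_min lexx.
split; first by rewrite !mulr_gt0.
split.
  have tm : theta * Num.min 1 (1 / r) <= 1.
    have : theta * Num.min 1 (1 / r) <= theta * 1 by apply: ler_wpM2l => //; exact: ltW.
    lra.
  apply: le_trans tg; rewrite -mulrA ler_piMr //; exact: ltW.
rewrite ge_min; apply/orP; right.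
have Lt0 : 0 < L * t by rewrite mulr_gt0.
have k1 : nu / (L * t) <= Num.min 1 (1 / r).
  rewrite le_min; apply/andP; split.
    by rewrite ler_pdivrMr // mul1r; lra.
  rewrite ler_pdivrMr //.
  have -> : 1 / r * (L * t) = (L * t) / r by rewrite mul1r mulrC.
  rewrite ler_pdivlMr //.
  have : nu * r <= 1 * r by apply: ler_wpM2r; [exact: ltW | lra].
  lra.
have -> : theta * nu / L = t * theta * (nu / (L * t)).
  by field; rewrite !gt_eqF.
by apply: ler_wpM2l => //; rewrite mulr_ge0 // ltW.
Qed.

End Trial.


Lemma Cpos (R : realFieldType) (L hhi be nu : R) : 0 < L -> L * hhi < 4 ->
  0 <= be -> be <= 1 -> nu < 1 ->
  0 < (1 - be) * (1 - L * hhi / 4) + be * (1 - nu).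
Proof.
move=> L0 Lh b0 b1 nu1.
have p1 : 0 < 1 - L * hhi / 4.
  have : L * hhi / 4 < 1 by rewrite ltr_pdivrMr //; lra.
  lra.
have q1 : 0 <= be * (1 - nu) by apply: mulr_ge0; lra.
have q2 : 0 <= (1 - be) * (1 - L * hhi / 4) by apply: mulr_ge0; lra.
case: (lerP be (1/2)) => hb.
  have : 0 <= (1/2 - be) * (1 - L * hhi / 4) by apply: mulr_ge0; lra.
  lra.
have : 0 <= (be - 1/2) * (1 - nu) by apply: mulr_ge0; lra.
lra.
Qed.

Theorem theorem6 (R : realType) (n : nat) (f : 'rV[R]_n -> R)
  (gf : 'rV[R]_n -> 'rV[R]_n) (L : R)
  (mu nu hlo hhi g00 beta theta tau eta : R) (x0 : 'rV[R]_n)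
  (x : nat -> 'rV[R]_n) (g0 h : nat -> R) :
  convex_fun f -> has_gradient f gf -> 0 < L -> lipschitz_grad gf L ->
  (exists xs, minimizer_set gf xs) ->
  0 < mu -> mu < nu -> nu < 1 ->
  0 < hlo -> hlo < 1 -> 1 <= g00 -> g00 <= hhi -> hhi < 4 / L ->
  0 <= beta <= 1 -> 0 < theta < 1 -> 1 < tau -> 0 < eta < 2 ->
  algorithm3 gf L mu nu hlo hhi beta theta tau eta x0 g00 x g0 h ->
  let alpha_min :=
    ((1 - beta) * (1 - L * hhi / 4) + beta * (1 - nu)) / (2 + 2 * beta ^+ 2 * nu ^+ 2) in
  let kappa4 :=
    eta * (2 - eta) * alpha_min * ((1 - beta) * (1 - L * hhi / 4) + beta * (1 - nu)) in
  let h_min := Num.min hlo (nu * theta / (hhi * (Num.max L 1) ^+ 2)) in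
  forall (xs : 'rV[R]_n) (K : nat), minimizer_set gf xs -> (1 <= K)%N ->
    (K%:R)^-1 * \sum_(k < K) enorm (gf (x k)) ^+ 2
      <= enorm (x0 - xs) ^+ 2 / (K%:R * kappa4 * h_min ^+ 2).
Proof.
move=> cf hg L0 lg _ mu0 munu nu1 hlo0 hlo1 g001 g00h hhiL /andP[b0 b1]
  /andP[th0 th1] tau1 /andP[e0 e2] [ex0 [eg00 Halg]] alpha_min kappa4 h_min xs K xsmin K1.
have nu0 : 0 < nu by exact: lt_trans mu0 munu.
have Lh : L * hhi < 4 by move: hhiL; rewrite ltr_pdivlMr // mulrC.
have hhi1 : 1 <= hhi by exact: le_trans g001 g00h.
have gxs : gf xs = 0 by exact: xsmin.
set C := (1 - beta) * (1 - L * hhi / 4) + beta * (1 - nu).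
have C0 : 0 < C by exact: Cpos.
have hlohhi : hlo <= hhi by lra.
have g0b : forall k, hlo <= g0 k <= hhi.
  elim=> [|k IH]; first by rewrite eg00; apply/andP; split; lra.
  have [_ [_ [_ ->]]] := Halg k.
  have pI : forall t, hlo <= projI hlo hhi t <= hhi.
    move=> t; rewrite /projI le_max lexx /= ge_max hlohhi /= ge_min lexx //.
  by case: ifP.
have hb : forall k, h_min <= h k /\ 0 < h k /\ h k <= hhi.
  move=> k; have [gx [[m [Hm1 [Hm2 ->]]] _]] := Halg k.
  have /andP[g0l g0u] := g0b k.
  have [t0 [tg tmin]] := @trial_bounds _ _ gf L nu theta (x k) (g0 k) m lg L0 gx nu0 nu1 th0 th1 (lt_le_trans hlo0 g0l) Hm1 m (leqnn m).
  split; last by split => //; exact: le_trans tg g0u.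
  apply: le_trans tmin; rewrite le_min; apply/andP; split.
    by apply: le_trans g0l; rewrite /h_min ge_min lexx.
  rewrite /h_min ge_min; apply/orP; right.
  set M := Num.max L 1.
  have M1 : 1 <= M by rewrite le_max lexx orbT.
  have ML : L <= M by rewrite le_max lexx.
  have m2 : M * 1 <= M * M by apply: ler_wpM2l => //; lra.
  have m3 : 1 * (M * M) <= hhi * (M * M) by apply: ler_wpM2r => //; nra.
  have A : L <= hhi * M ^+ 2 by rewrite expr2; lra.
  have A0 : 0 < hhi * M ^+ 2 by lra.
  rewrite ler_pdivrMr //.
  have -> : theta * nu / L * (hhi * M ^+ 2) = nu * theta + theta * nu * (hhi * M ^+ 2 - L) / L.
    by field; rewrite gt_eqF.
  have : 0 <= theta * nu * (hhi * M ^+ 2 - L) / L.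
    by apply: divr_ge0; [apply: mulr_ge0; [apply: mulr_ge0|]|]; lra.
  lra.
have hmin0 : 0 < h_min.
  rewrite /h_min lt_min hlo0 /=; apply: divr_gt0; first by rewrite mulr_gt0.
  apply: mulr_gt0; first lra.
  by apply: exprn_gt0; apply: lt_le_trans (ltr01 : (0:R) < 1) _; rewrite le_max lexx orbT.
have c0 : 0 < 2 + 2 * beta ^+ 2 * nu ^+ 2.
  have := sqr_ge0 (beta * nu); rewrite exprMn; lra.
have kap0 : 0 < kappa4.
  rewrite /kappa4 /alpha_min -/C.
  by apply: mulr_gt0 => //; apply: mulr_gt0; [apply: mulr_gt0; lra| exact: divr_gt0].
have stepk : forall k, enorm (x k.+1 - xs) ^+ 2 <=
    enorm (x k - xs) ^+ 2 - kappa4 * h_min ^+ 2 * enorm (gf (x k)) ^+ 2.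
  move=> k; have [gx [[m [_ [Hm2 Hhk]]] [Hx _]]] := Halg k.
  have [hm [hp hh]] := hb k.
  rewrite Hx.
  have rat : Defs.ratio gf (x k) (h k) <= nu by rewrite Hhk.
  have S := step f gf L beta nu eta hhi (x k) xs (h k) cf hg lg L0 gxs gx hp hh Lh b0 b1 nu0 nu1 e0 e2 rat.
  apply: (le_trans S); rewrite lerD2l lerN2 enorm_sq.
  change (kappa4 * h_min ^+ 2 * dotv (gf (x k)) (gf (x k)) <=
     kappa4 * (h k ^+ 2 * dotv (gf (x k)) (gf (x k)))).
  rewrite -mulrA; apply: ler_wpM2l; first exact: ltW.
  apply: ler_wpM2r; first exact: dotv_ge0.
  by rewrite !expr2; apply: ler_pM => //; exact: ltW.
have tele : forall K, enorm (x K - xs) ^+ 2 +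
    kappa4 * h_min ^+ 2 * \sum_(k < K) enorm (gf (x k)) ^+ 2 <= enorm (x0 - xs) ^+ 2.
  elim=> [|K' IH]; first by rewrite big_ord0 mulr0 addr0 ex0.
  rewrite big_ord_recr /= mulrDr; have := stepk K'; lra.
have S0 := tele K.
set S := \sum_(k < K) enorm (gf (x k)) ^+ 2 in S0 *.
have Kp : 0 < K%:R :> R by rewrite ltr0n.
have E0 : 0 <= enorm (x K - xs) ^+ 2 by exact: sqr_ge0.
rewrite ler_pdivlMr; last by apply: mulr_gt0; [apply: mulr_gt0 | apply: exprn_gt0].
have -> : K%:R^-1 * S * (K%:R * kappa4 * h_min ^+ 2) = kappa4 * h_min ^+ 2 * S.
  by field; rewrite gt_eqF.
lra.
Qed.
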